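(* Let $q\ge3$ be an integer. Let $H_1,H_2$ be groups with $\mathcal{W}(H_1,\gamma_{q-1}(H_1),\gamma_q(H_1))\ne0$ and $\mathrm{W}(H_2,\gamma_{q-1}(H_2))\ne0$. Let $G$ be a group containing subgroups isomorphic to $H_1$ and to $H_2$ which are both retracts of $G$. Then $\mathcal{W}(G,\gamma_{q-1}(G),\gamma_q(G))\ne0$ and $\mathrm{W}(G,\gamma_{q-1}(G))\ne0$.
   Context: $\gamma_1(H)=H$, $\gamma_{k+1}(H)=[H,\gamma_k(H)]$. A subgroup $H\leqslant G$ is a retract if there is a homomorphism $\alpha\colon G\to G$ with $\alpha(G)=H$ and $\alpha|_H=\mathrm{id}_H$. For normal subgroups $L\geqslant N$ of a group $G$: $\mathrm{Q}(N)^G$ homogeneous quasimorphisms on $N$ invariant under $G$-conjugation, $\mathrm{H}^1(N)^G$ $G$-invariant homomorphisms $N\to\mathbb{R}$, $\mathcal{W}(G,L,N)=\mathrm{Q}(N)^G/(\mathrm{H}^1(N)^G+\{\psi|_N:\psi\in\mathrm{Q}(L)^G\})$, $\mathrm{W}(G,N)=\mathcal{W}(G,G,N)$. *)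

(* Defs.v *)
From Stdlib Require Import Reals ZArith.
Open Scope R_scope.

Record Group : Type := {
  carrier :> Type;
  gmul : carrier -> carrier -> carrier;
  ginv : carrier -> carrier;
  gone : carrier;
  gmul_assoc : forall x y z, gmul x (gmul y z) = gmul (gmul x y) z;
  gmul_1l : forall x, gmul gone x = x;
  gmul_1r : forall x, gmul x gone = x;
  gmul_Vl : forall x, gmul (ginv x) x = gone;
  gmul_Vr : forall x, gmul x (ginv x) = gone
}.

Arguments gmul {g}. Arguments ginv {g}. Arguments gone {g}.

Definition is_subgroup (G : Group) (S : G -> Prop) : Prop :=
  S gone /\ (forall x y, S x -> S y -> S (gmul x y)) /\ (forall x, S x -> S (ginv x)).

Definition gen (G : Group) (A : G -> Prop) : G -> Prop :=
  fun x => forall S, is_subgroup G S -> (forall a, A a -> S a) -> S x.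

Definition commg {G : Group} (x y : G) : G := gmul (gmul (ginv x) (ginv y)) (gmul x y).

Definition commsub (G : Group) (A B : G -> Prop) : G -> Prop :=
  gen G (fun z => exists a b, A a /\ B b /\ z = commg a b).

(* lcs_aux G n = gamma_{n+1}(G). *)
Fixpoint lcs_aux (G : Group) (n : nat) : G -> Prop :=
  match n with
  | O => fun _ => True
  | S m => commsub G (fun _ => True) (lcs_aux G m)
  end.

Definition gamma (G : Group) (k : nat) : G -> Prop := lcs_aux G (k - 1).

Fixpoint gpow {G : Group} (x : G) (n : nat) : G :=
  match n with O => gone | S m => gmul x (gpow x m) end.

Definition gzpow {G : Group} (x : G) (z : Z) : G :=
  match z with
  | Z0 => gone
  | Zpos p => gpow x (Pos.to_nat p)
  | Zneg p => ginv (gpow x (Pos.to_nat p))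
  end.

(* phi : G -> R, only its values on N matter. *)
Definition homog_quasimorphism (G : Group) (N : G -> Prop) (phi : G -> R) : Prop :=
  (exists D : R, forall x y, N x -> N y ->
       Rabs (phi (gmul x y) - phi x - phi y) <= D) /\
  (forall x (n : Z), N x -> phi (gzpow x n) = IZR n * phi x).

Definition hom_to_R (G : Group) (N : G -> Prop) (phi : G -> R) : Prop :=
  forall x y, N x -> N y -> phi (gmul x y) = phi x + phi y.

Definition G_invariant (G : Group) (N : G -> Prop) (phi : G -> R) : Prop :=
  forall g x, N x -> phi (gmul (gmul g x) (ginv g)) = phi x.

(* W(G, L, N) <> 0 : some element of Q(N)^G is not in H^1(N)^G + Q(L)^G|_N. *)
Definition calW_nonzero (G : Group) (L N : G -> Prop) : Prop :=
  exists phi : G -> R,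
    homog_quasimorphism G N phi /\ G_invariant G N phi /\
    ~ (exists h psi : G -> R,
          hom_to_R G N h /\ G_invariant G N h /\
          homog_quasimorphism G L psi /\ G_invariant G L psi /\
          forall x, N x -> phi x = h x + psi x).

Definition W_nonzero (G : Group) (N : G -> Prop) : Prop :=
  calW_nonzero G (fun _ => True) N.

Definition is_hom (G H : Group) (f : G -> H) : Prop :=
  forall x y, f (gmul x y) = gmul (f x) (f y).

Definition is_retract (G : Group) (K : G -> Prop) : Prop :=
  exists alpha : G -> G, is_hom G G alpha /\
    (forall k, K k <-> exists g, alpha g = k) /\
    (forall k, K k -> alpha k = k).

Definition subgroup_iso_to (H G : Group) (K : G -> Prop) : Prop :=
  is_subgroup G K /\
  exists f : H -> G, is_hom H G f /\ (forall x y, f x = f y -> x = y) /\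
    (forall g, K g <-> exists h, f h = g).

(* Main.v *)
Require Import Defs.
From Stdlib Require Import Reals ZArith ClassicalEpsilon.

Section Aux.

Lemma hom_one (A B : Group) (u : A -> B) : is_hom A B u -> u gone = gone.
Proof.
  intros Hu.
  assert (E : u gone = gmul (u gone) (u gone)) by (rewrite <- Hu, gmul_1l; reflexivity).
  assert (E2 : gmul (ginv (u gone)) (u gone) = gmul (ginv (u gone)) (gmul (u gone) (u gone)))
    by (rewrite <- E; reflexivity).
  rewrite gmul_assoc, gmul_Vl, gmul_1l in E2. symmetry; exact E2.
Qed.

Lemma hom_inv (A B : Group) (u : A -> B) : is_hom A B u -> forall x, u (ginv x) = ginv (u x).
Proof.
  intros Hu x.
  assert (E : gmul (u x) (u (ginv x)) = gone) by (rewrite <- Hu, gmul_Vr; apply hom_one; exact Hu).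
  assert (E2 : gmul (ginv (u x)) (gmul (u x) (u (ginv x))) = gmul (ginv (u x)) gone)
    by (rewrite E; reflexivity).
  rewrite gmul_assoc, gmul_Vl, gmul_1l, gmul_1r in E2. exact E2.
Qed.

Lemma hom_pow (A B : Group) (u : A -> B) : is_hom A B u -> forall x n, u (gpow x n) = gpow (u x) n.
Proof.
  intros Hu x n; induction n; simpl.
  - apply hom_one; exact Hu.
  - rewrite Hu, IHn; reflexivity.
Qed.

Lemma hom_zpow (A B : Group) (u : A -> B) : is_hom A B u -> forall x n, u (gzpow x n) = gzpow (u x) n.
Proof.
  intros Hu x n; destruct n; simpl.
  - apply hom_one; exact Hu.
  - apply hom_pow; exact Hu.
  - rewrite hom_inv by exact Hu. rewrite hom_pow by exact Hu. reflexivity.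
Qed.

Lemma hom_commg (A B : Group) (u : A -> B) : is_hom A B u -> forall x y, u (commg x y) = commg (u x) (u y).
Proof.
  intros Hu x y; unfold commg. rewrite !Hu, !hom_inv by exact Hu. reflexivity.
Qed.

Lemma hom_lcs (A B : Group) (u : A -> B) : is_hom A B u ->
  forall n x, lcs_aux A n x -> lcs_aux B n (u x).
Proof.
  intros Hu n; induction n as [|m IH]; intros x Hx; simpl in *; [exact I|].
  apply (Hx (fun a => commsub B (fun _ => True) (lcs_aux B m) (u a))).
  - split; [|split].
    + rewrite hom_one by exact Hu. intros S [S1 _] _; exact S1.
    + intros a b Ha Hb. rewrite Hu. intros S HS Hgen.
      apply (proj1 (proj2 HS)); [apply Ha|apply Hb]; assumption.
    + intros a Ha. rewrite hom_inv by exact Hu. intros S HS Hgen.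
      apply (proj2 (proj2 HS)). apply Ha; assumption.
  - intros z [a [b [_ [Hb ->]]]]. intros S HS Hgen. apply Hgen.
    exists (u a), (u b). split; [exact I|split; [apply IH; exact Hb|]].
    apply hom_commg; exact Hu.
Qed.

Lemma hom_gamma (A B : Group) (u : A -> B) : is_hom A B u ->
  forall k x, gamma A k x -> gamma B k (u x).
Proof. intros Hu k x; unfold gamma; apply hom_lcs; exact Hu. Qed.

Lemma transfer (H G : Group) (f : H -> G) (r : G -> H) (LH NH : H -> Prop) (LG NG : G -> Prop) :
  is_hom H G f -> is_hom G H r -> (forall h, r (f h) = h) ->
  (forall x, NH x -> NG (f x)) -> (forall x, LH x -> LG (f x)) ->
  (forall x, NG x -> NH (r x)) ->
  calW_nonzero H LH NH -> calW_nonzero G LG NG.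
Proof.
  intros Hf Hr Hrf fN fL rN [phi [[[D HD] Hhom] [Hinv Hnot]]].
  exists (fun g => phi (r g)). split; [split|split].
  - exists D. intros x y Hx Hy. rewrite Hr. apply HD; apply rN; assumption.
  - intros x n Hx. rewrite hom_zpow by exact Hr. apply Hhom. apply rN; exact Hx.
  - intros g x Hx. rewrite !Hr, hom_inv by exact Hr. apply Hinv. apply rN; exact Hx.
  - intros [h [psi [Hh [Hhi [[[D2 HD2] Hpsi] [Hpsii Hdec]]]]]].
    apply Hnot. exists (fun y => h (f y)), (fun y => psi (f y)).
    split; [|split; [|split; [split|split]]].
    + intros x y Hx Hy. rewrite Hf. apply Hh; apply fN; assumption.
    + intros g x Hx. rewrite !Hf, hom_inv by exact Hf. apply Hhi. apply fN; exact Hx.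
    + exists D2. intros x y Hx Hy. rewrite Hf. apply HD2; apply fL; assumption.
    + intros x n Hx. rewrite hom_zpow by exact Hf. apply Hpsi. apply fL; exact Hx.
    + intros g x Hx. rewrite !Hf, hom_inv by exact Hf. apply Hpsii. apply fL; exact Hx.
    + intros x Hx. rewrite <- Hdec by (apply fN; exact Hx). rewrite Hrf. reflexivity.
Qed.

Lemma retraction (H G : Group) :
  (exists K : G -> Prop, subgroup_iso_to H G K /\ is_retract G K) ->
  exists f r, is_hom H G f /\ is_hom G H r /\ forall h, r (f h) = h.
Proof.
  intros [K [[_ [f [Hf [Hinj HK]]]] [alpha [Ha [Himg Hfix]]]]].
  assert (X : forall g, {h | f h = alpha g}).
  { intro g. apply constructive_indefinite_description. apply HK. apply Himg. exists g; reflexivity. }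
  exists f, (fun g => proj1_sig (X g)). split; [exact Hf|split].
  - intros x y. apply Hinj. rewrite Hf, !(proj2_sig (X _)). apply Ha.
  - intros h. apply Hinj. rewrite (proj2_sig (X _)). apply Hfix. apply HK. exists h; reflexivity.
Qed.

End Aux.

Theorem proposition11p22 (q : nat) (H1 H2 G : Group) :
  (3 <= q)%nat ->
  calW_nonzero H1 (gamma H1 (q - 1)) (gamma H1 q) ->
  W_nonzero H2 (gamma H2 (q - 1)) ->
  (exists K1 : G -> Prop, subgroup_iso_to H1 G K1 /\ is_retract G K1) ->
  (exists K2 : G -> Prop, subgroup_iso_to H2 G K2 /\ is_retract G K2) ->
  calW_nonzero G (gamma G (q - 1)) (gamma G q) /\ W_nonzero G (gamma G (q - 1)).
Proof.
  intros _ W1 W2 R1 R2.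
  destruct (retraction H1 G R1) as [f1 [r1 [Hf1 [Hr1 E1]]]].
  destruct (retraction H2 G R2) as [f2 [r2 [Hf2 [Hr2 E2]]]].
  split.
  - apply (transfer H1 G f1 r1 (gamma H1 (q-1)) (gamma H1 q) _ _ Hf1 Hr1 E1); try (intros; apply hom_gamma; assumption).
    exact W1.
  - apply (transfer H2 G f2 r2 (fun _ => True) (gamma H2 (q-1)) _ _ Hf2 Hr2 E2); try (intros; try exact I; apply hom_gamma; assumption).
    exact W2.
Qed.
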